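(* Let $H_0=\{x\in\mathbb{R}^n:\sum x_i=0\}$, $\hat e_i=e_i-\frac1n\sum_k e_k$, $\Delta_n^0=\mathrm{Conv}\{\hat e_1,\dots,\hat e_n\}$. Let $A:H_0\to H_0$ be a non-singular linear map and $B=(A^* )^{-1}$, where $A^*$ is the adjoint with respect to the standard inner product restricted to $H_0$. Then $$\big(Root(A(\Delta_n^0))\big)^\circ=Zono(B(\Delta_n^0)),$$ polarity taken inside $H_0$.
   Context: For a simplex $\Delta_A=\mathrm{Conv}\{a_1,\dots,a_n\}$, the generalized root polytope is $Root(\Delta_A)=\mathrm{Conv}\{a_i-a_j:1\le i\ne j\le n\}$. For a non-degenerate simplex with vertices $a_1,\dots,a_m$ and barycenter $a$, $Zono(\Delta_A)=\sum_i[a,a_i]$ (Minkowski sum); so $Zono(B(\Delta_n^0))=\sum_i[0,B\hat e_i]$. For $K\subset H_0$ with $0$ in its relative interior, $K^\circ=\{y\in H_0:\langle y,x\rangle\le 1\ \forall x\in K\}$. *)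

(* Defs.v *)
From HB Require Import structures.
From mathcomp Require Import all_boot all_order all_algebra.
Set Implicit Arguments. Unset Strict Implicit. Unset Printing Implicit Defensive.
Import Order.TTheory GRing.Theory Num.Theory.
Local Open Scope ring_scope.

Definition dotv (R : realFieldType) (n : nat) (x y : 'cV[R]_n) : R :=
  \sum_(i < n) x i 0 * y i 0.

Definition H0 (R : realFieldType) (n : nat) (x : 'cV[R]_n) : Prop :=
  \sum_(i < n) x i 0 = 0.

Definition ehat (R : realFieldType) (n : nat) (i : 'I_n) : 'cV[R]_n :=
  delta_mx i 0 - (n%:R)^-1 *: const_mx 1.

Definition conv (R : realFieldType) (n : nat) (I : finType) (P : pred I)
    (v : I -> 'cV[R]_n) (x : 'cV[R]_n) : Prop :=
  exists lam : I -> R,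
    [/\ forall i, 0 <= lam i,
        forall i, ~~ P i -> lam i = 0,
        \sum_i lam i = 1 &
        x = \sum_i lam i *: v i].

Definition root_polytope (R : realFieldType) (n m : nat) (a : 'I_m -> 'cV[R]_n) :
    'cV[R]_n -> Prop :=
  conv (fun p : 'I_m * 'I_m => p.1 != p.2) (fun p => a p.1 - a p.2).

(* Zono(Delta_A) = sum_i [b, a_i] (Minkowski sum), b the barycenter of a_1..a_m *)
Definition zono (R : realFieldType) (n m : nat) (a : 'I_m -> 'cV[R]_n)
    (x : 'cV[R]_n) : Prop :=
  let b := (m%:R)^-1 *: \sum_(i < m) a i in
  exists t : 'I_m -> R,
    (forall i, 0 <= t i <= 1) /\ x = b + \sum_i t i *: (a i - b).

Definition polar0 (R : realFieldType) (n : nat) (K : 'cV[R]_n -> Prop)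
    (y : 'cV[R]_n) : Prop :=
  H0 y /\ forall x, K x -> dotv y x <= 1.

(* Main.v *)
Require Import Defs.
From HB Require Import structures.
From mathcomp Require Import all_boot all_order all_algebra.
Import Order.TTheory GRing.Theory Num.Theory.
Set Implicit Arguments. Unset Strict Implicit.
Local Open Scope ring_scope.

Definition sv (R : realFieldType) (n : nat) (x : 'cV[R]_n) : R := \sum_(i < n) x i 0.

Lemma svD (R : realFieldType) n (x y : 'cV[R]_n) : sv (x + y) = sv x + sv y.
Proof. by rewrite /sv -big_split; apply: eq_bigr => i _; rewrite mxE. Qed.
Lemma svN (R : realFieldType) n (x : 'cV[R]_n) : sv (- x) = - sv x.
Proof. by rewrite /sv -sumrN; apply: eq_bigr => i _; rewrite mxE. Qed.
Lemma svZ (R : realFieldType) n a (x : 'cV[R]_n) : sv (a *: x) = a * sv x.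
Proof. by rewrite /sv mulr_sumr; apply: eq_bigr => i _; rewrite mxE. Qed.
Lemma svB (R : realFieldType) n (x y : 'cV[R]_n) : sv (x - y) = sv x - sv y.
Proof. by rewrite svD svN. Qed.
Lemma sv1 (R : realFieldType) n : sv (const_mx 1 : 'cV[R]_n) = n%:R.
Proof. rewrite /sv (eq_bigr (fun=> 1)) ?sumr_const ?card_ord //. by move=> i _; rewrite mxE. Qed.
Lemma sv_sum (R : realFieldType) n (I : finType) (f : I -> 'cV[R]_n) :
  sv (\sum_i f i) = \sum_i sv (f i).
Proof. rewrite /sv exchange_big /=; apply: eq_bigr => i _; by rewrite summxE. Qed.
Lemma svdelta (R : realFieldType) n (i : 'I_n) : sv (delta_mx i 0 : 'cV[R]_n) = 1.
Proof.
rewrite /sv (bigD1 i) //= big1 ?addr0; first by rewrite mxE !eqxx.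
by move=> j /negbTE jn; rewrite mxE jn.
Qed.

Lemma nR0 (R : realFieldType) n : (0 < n)%N -> (n%:R : R) != 0.
Proof. by move=> n0; rewrite pnatr_eq0 -lt0n. Qed.

Lemma sv_ehat (R : realFieldType) n i : (0 < n)%N -> sv (ehat R i : 'cV_n) = 0.
Proof. move=> n0; rewrite /ehat svB svZ svdelta sv1 mulVf ?subrr //; exact: nR0. Qed.

Lemma H0E (R : realFieldType) n (x : 'cV[R]_n) : H0 x <-> sv x = 0.
Proof. by []. Qed.

Lemma mx_ext (R : realFieldType) n (M N : 'M[R]_n) :
  (forall x : 'cV_n, M *m x = N *m x) -> M = N.
Proof.
move=> H; apply/matrixP => i j.
have := congr1 (fun v : 'cV_n => v i 0) (H (delta_mx j 0)).
by rewrite -!colE !mxE.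
Qed.

Definition dotm (R : realFieldType) n (x y : 'cV[R]_n) := dotv x y.
Lemma dotvE (R : realFieldType) n (x y : 'cV[R]_n) : dotv x y = (x^T *m y) 0 0.
Proof. by rewrite /dotv mxE; apply: eq_bigr => i _; rewrite mxE. Qed.
Lemma dotvC (R : realFieldType) n (x y : 'cV[R]_n) : dotv x y = dotv y x.
Proof. by rewrite /dotv; apply: eq_bigr => i _; rewrite mulrC. Qed.
Lemma dotvBl (R : realFieldType) n (x y z : 'cV[R]_n) : dotv (x - y) z = dotv x z - dotv y z.
Proof. by rewrite !dotvE linearB /= mulmxBl !mxE. Qed.
Lemma dotv_sumr (R : realFieldType) n (I : finType) x (f : I -> 'cV[R]_n) :
  dotv x (\sum_i f i) = \sum_i dotv x (f i).
Proof. rewrite dotvE mulmx_sumr summxE; apply: eq_bigr => i _; by rewrite dotvE. Qed.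
Lemma dotvZr (R : realFieldType) n a (x y : 'cV[R]_n) : dotv x (a *: y) = a * dotv x y.
Proof. by rewrite !dotvE -scalemxAr mxE. Qed.
Lemma dotv_delta (R : realFieldType) n (i : 'I_n) (z : 'cV[R]_n) : dotv (delta_mx i 0) z = z i 0.
Proof.
rewrite /dotv (bigD1 i) //= big1 ?addr0; first by rewrite mxE !eqxx mul1r.
by move=> j /negbTE jn; rewrite mxE jn mul0r.
Qed.
Lemma ehatB (R : realFieldType) n (i j : 'I_n) : ehat R i - ehat R j = delta_mx i 0 - delta_mx j 0.
Proof. rewrite /ehat; set c := _ *: _; by rewrite opprB addrA subrK. Qed.


Definition Jn (R : realFieldType) n : 'M[R]_n := (n%:R)^-1 *: const_mx 1.

Lemma JnE (R : realFieldType) n (x : 'cV[R]_n) :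
  Jn R n *m x = ((n%:R)^-1 * sv x) *: const_mx 1.
Proof.
rewrite /Jn -scalemxAl; apply/matrixP => i j; rewrite !mxE mulr1; congr (_ * _).
rewrite /sv; apply: eq_bigr => k _; by rewrite !mxE mul1r (ord1 j).
Qed.

Lemma Jn0 (R : realFieldType) n (x : 'cV[R]_n) : H0 x -> Jn R n *m x = 0.
Proof. by move=> h; rewrite JnE (_ : sv x = 0) // mulr0 scale0r. Qed.

Lemma svJn (R : realFieldType) n (x : 'cV[R]_n) : (0 < n)%N -> sv (Jn R n *m x) = sv x.
Proof. by move=> n0; rewrite JnE svZ sv1 mulrAC mulVf ?mul1r // nR0. Qed.

Lemma H0P (R : realFieldType) n (x : 'cV[R]_n) : (0 < n)%N -> H0 ((1%:M - Jn R n) *m x).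
Proof. by move=> n0; rewrite /H0 -/(sv _) mulmxBl mul1mx svB svJn // subrr. Qed.

Lemma PE (R : realFieldType) n (x : 'cV[R]_n) : H0 x -> (1%:M - Jn R n) *m x = x.
Proof. by move=> h; rewrite mulmxBl mul1mx Jn0 // subr0. Qed.

Lemma JnJn (R : realFieldType) n (x : 'cV[R]_n) : (0 < n)%N -> Jn R n *m (Jn R n *m x) = Jn R n *m x.
Proof. by move=> n0; rewrite [in LHS]JnE svJn // -JnE. Qed.

Lemma BAy (R : realFieldType) (n : nat) (Astar B : 'M[R]_n) :
  (0 < n)%N ->
  (forall y, H0 y -> H0 (Astar *m y)) ->
  (forall y, H0 y -> H0 (B *m y)) ->
  (forall y, H0 y -> Astar *m (B *m y) = y) ->
  forall y, H0 y -> B *m (Astar *m y) = y.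
Proof.
move=> n0 hAs hB hAB y hy.
pose P := 1%:M - Jn R n.
pose D := P *m Astar *m P + Jn R n.
pose C := B *m P + Jn R n.
have PEP (v : 'cV_n) : H0 v -> P *m v = v := @PE _ _ v.
have HP (v : 'cV_n) : H0 (P *m v) := H0P v n0.
have De (v : 'cV_n) : D *m v = P *m (Astar *m (P *m v)) + Jn R n *m v.
  by rewrite /D mulmxDl -!mulmxA.
have Ce (v : 'cV_n) : C *m v = B *m (P *m v) + Jn R n *m v.
  by rewrite /C mulmxDl -!mulmxA.
have PJ (v : 'cV_n) : P *m (Jn R n *m v) = 0.
  by rewrite /P mulmxBl mul1mx JnJn // subrr.
have DC : D *m C = 1%:M.
  apply: mx_ext => x; rewrite mul1mx -mulmxA Ce De.
  have hw := HP x.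
  rewrite mulmxDr PJ addr0 (PEP _ (hB _ hw)) hAB // (PEP _ hw).
  by rewrite mulmxDr (Jn0 (hB _ hw)) add0r JnJn // /P mulmxBl mul1mx subrK.
have CD := mulmx1C DC.
have := congr1 (fun M => M *m y) CD; rewrite mul1mx -mulmxA /= De.
rewrite (PEP _ hy) (PEP _ (hAs _ hy)) (Jn0 hy) addr0 Ce (PEP _ (hAs _ hy)) (Jn0 (hAs _ hy)).
by rewrite addr0.
Qed.


Lemma ehat_entry (R : realFieldType) n (i k : 'I_n) :
  (ehat R i : 'cV_n) k 0 = (i == k)%:R - (n%:R)^-1.
Proof. by rewrite /ehat !mxE eqxx andbT mulr1 eq_sym. Qed.

Lemma sum_ehat_entry (R : realFieldType) n (t : 'I_n -> R) (k : 'I_n) :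
  (\sum_i t i *: ehat R i : 'cV_n) k 0 = t k - (n%:R)^-1 * \sum_i t i.
Proof.
rewrite summxE (eq_bigr (fun i => t i * (i == k)%:R - (n%:R)^-1 * t i)); last first.
  by move=> i _; rewrite mxE ehat_entry mulrBr [_ * n%:R^-1]mulrC.
rewrite sumrB -mulr_sumr; congr (_ - _).
rewrite (bigD1 k) //= big1 ?addr0 ?eqxx ?mulr1 //.
by move=> i /negbTE ->; rewrite mulr0.
Qed.

Lemma sum_ehat (R : realFieldType) n : (0 < n)%N -> \sum_(i < n) (ehat R i : 'cV_n) = 0.
Proof.
move=> n0; rewrite (eq_bigr (fun i => 1 *: ehat R i)); last by move=> i _; rewrite scale1r.
apply/matrixP => k j; rewrite (ord1 j) sum_ehat_entry mxE sumr_const card_ord.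
by rewrite -[1 *+ n]/((n%:R : R)) mulVf ?subrr // nR0.
Qed.

Unset Implicit Arguments. Set Strict Implicit.

Theorem mainTheorem10 (R : realFieldType) (n : nat) (A Astar B : 'M[R]_n) :
  (0 < n)%N ->
  (forall x, H0 x -> H0 (A *m x)) ->
  (forall x, H0 x -> A *m x = 0 -> x = 0) ->
  (forall y, H0 y -> H0 (Astar *m y)) ->
  (forall x y, H0 x -> H0 y -> dotv (A *m x) y = dotv x (Astar *m y)) ->
  (forall y, H0 y -> H0 (B *m y)) ->
  (forall y, H0 y -> Astar *m (B *m y) = y) ->
  forall y : 'cV[R]_n,
    polar0 (root_polytope (fun i : 'I_n => A *m ehat R i)) y <->
    zono (fun i : 'I_n => B *m ehat R i) y.
Proof.
move=> n0 hA _ hAs hadj hB hAB y.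
have hBA := BAy n0 hAs hB hAB.
have H0e (i j : 'I_n) : H0 (ehat R i - ehat R j).
  by rewrite /H0 -/(sv _) svB !sv_ehat // subrr.
have key (v : 'cV_n) (i j : 'I_n) : H0 v ->
    dotv v (A *m ehat R i - A *m ehat R j) = (Astar *m v) i 0 - (Astar *m v) j 0.
  move=> hv; rewrite -mulmxBr dotvC hadj ?H0e // ehatB dotvBl !dotv_delta.
  by [].
have bar : (n%:R)^-1 *: \sum_(i < n) B *m ehat R i = 0.
  by rewrite -mulmx_sumr sum_ehat // mulmx0 scaler0.
have zE (t : 'I_n -> R) :
    (n%:R)^-1 *: \sum_(i < n) B *m ehat R i +
      \sum_i t i *: (B *m ehat R i - (n%:R)^-1 *: \sum_(i < n) B *m ehat R i)
    = B *m \sum_i t i *: ehat R i.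
  rewrite bar add0r mulmx_sumr; apply: eq_bigr => i _.
  by rewrite subr0 scalemxAr.
split.
- move=> [hy hK].
  pose z := Astar *m y.
  have hz : H0 z := hAs _ hy.
  have dif (i j : 'I_n) : z i 0 - z j 0 <= 1.
    have [->|ij] := eqVneq i j; first by rewrite subrr ler01.
    rewrite -key //; apply: hK.
    exists (fun p => (p == (i, j))%:R); split.
    + by move=> p; rewrite ler0n.
    + move=> p hp; case: eqP => // pe; move: hp; rewrite pe /= ij //.
    + by rewrite (bigD1 (i, j)) //= big1 ?addr0 ?eqxx // => p /negbTE ->.
    + rewrite (bigD1 (i, j)) //= big1 ?addr0 ?eqxx ?scale1r // => p /negbTE ->.
      by rewrite scale0r.
  pose i0 := [arg min_(i < Ordinal n0) z i 0]%O.
  have hmin (k : 'I_n) : z i0 0 <= z k 0.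
    rewrite /i0; case: arg_minP => //= m _ Hm; exact: Hm.
  exists (fun k => z k 0 - z i0 0); split.
    by move=> k; rewrite subr_ge0 hmin dif.
  rewrite zE -[LHS]hBA //; congr (B *m _).
  apply/matrixP => k j; rewrite (ord1 j) sum_ehat_entry sumrB sumr_const card_ord.
  have -> : \sum_(i < n) z i 0 = 0 by exact: hz.
  rewrite -[z i0 0 *+ n]mulr_natr sub0r mulrN mulrC -mulrA mulfV ?nR0 // mulr1 opprK.
  by rewrite subrK.
- move=> [t [ht ->]]; rewrite zE.
  set w := \sum_i t i *: ehat R i.
  have hw : H0 w.
    rewrite /H0 -/(sv _) /w sv_sum big1 // => i _.
    by rewrite svZ sv_ehat // mulr0.
  split; first exact: hB.
  move=> x [lam [l0 lP l1 ->]].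
  rewrite dotv_sumr -l1; apply: ler_sum => p _.
  rewrite dotvZr (key _ _ _ (hB _ hw)) (hAB _ hw).
  rewrite -[X in _ <= X]mulr1; apply: ler_wpM2l => //.
  rewrite !sum_ehat_entry opprB addrA subrK.
  have := ht p.1; have := ht p.2; case/andP => h1 _; case/andP => _ h2.
  by rewrite lerBlDr (le_trans h2) // lerDl.
Qed.
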